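(* The uniform chirotopes are exactly the pre-CC-systems.
   Context: Let $E$ be a finite ground set whose elements are called points. Consider a boolean function on all ordered triples of distinct points of $E$; write $pqr$ to mean that the value associated with $(p,q,r)$ is true. The following axioms are understood with quantification over all pairwise distinct points: Axiom 1 (cyclic symmetry): $pqr \Longrightarrow qrp$. Axiom 2 (antisymmetry): $pqr \Longrightarrow \neg\, prq$. Axiom 3 (nondegeneracy): $pqr \vee prq$. Axiom 5 (transitivity): $tsp \wedge tsq \wedge tsr \wedge tpq \wedge tqr \Longrightarrow tpr$. (Given Axioms 1–3, Axiom 5 is equivalent to Axiom 5' (dual transitivity): $tps \wedge tqs \wedge trs \wedge tpq \wedge tqr \Longrightarrow tpr$.) A pre-CC-system is such a boolean function satisfying Axioms 1, 2, 3 and 5. A uniform chirotope is such a boolean function satisfying Axioms 1, 2, 3 and the Grassmann–Plücker relations: for all pairwise distinct points $t,p,q,r,s$, the set $\{(tpq \wedge trs) \vee (tqp \wedge tsr);\ (trp \wedge tqs) \vee (tpr \wedge tsq);\ (tps \wedge tqr) \vee (tsp \wedge trq)\}$ contains both the value true and the value false. *)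

(* Defs.v *)
From mathcomp Require Import all_boot.
Set Implicit Arguments. Unset Strict Implicit. Unset Printing Implicit Defensive.

(* Only its values on triples of pairwise distinct points matter: every axiom
   below is quantified over pairwise distinct points only. *)
Definition triple_fun (E : finType) := E -> E -> E -> bool.

Section TripleProps.
Variables (E : finType) (f : triple_fun E).

Definition distinct3 (p q r : E) := [/\ p != q, p != r & q != r].

Definition cyclic_symmetry := forall p q r : E, distinct3 p q r -> f p q r -> f q r p.
Definition antisymmetry := forall p q r : E, distinct3 p q r -> f p q r -> ~~ f p r q.
Definition nondegeneracy := forall p q r : E, distinct3 p q r -> f p q r || f p r q.

Definition distinct5 (t p q r s : E) := uniq [:: t; p; q; r; s].

Definition transitivity := forall t s p q r : E, distinct5 t s p q r ->
  f t s p -> f t s q -> f t s r -> f t p q -> f t q r -> f t p r.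

Definition pre_CC_system := [/\ cyclic_symmetry, antisymmetry, nondegeneracy & transitivity].

Definition has_true_and_false (a b c : bool) :=
  (true \in [:: a; b; c]) && (false \in [:: a; b; c]).

Definition grassmann_pluecker := forall t p q r s : E, distinct5 t p q r s ->
  has_true_and_false
    ((f t p q && f t r s) || (f t q p && f t s r))
    ((f t r p && f t q s) || (f t p r && f t s q))
    ((f t p s && f t q r) || (f t s p && f t r q)).

Definition uniform_chirotope := [/\ cyclic_symmetry, antisymmetry, nondegeneracy & grassmann_pluecker].
End TripleProps.

(* Main.v *)
Require Import Defs.
From mathcomp Require Import all_boot zify.
Set Implicit Arguments. Unset Strict Implicit.

Lemma perm5 (E : finType) (t a b c d a' b' c' d' : E) :
  perm_eq [:: a;b;c;d] [:: a';b';c';d'] -> distinct5 t a b c d -> distinct5 t a' b' c' d'.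
Proof.
move=> H; rewrite -(perm_cons t) in H.
by rewrite /distinct5 (perm_uniq H).
Qed.

Definition GPat (E : finType) (f : triple_fun E) (t p q r s : E) := has_true_and_false
    ((f t p q && f t r s) || (f t q p && f t s r))
    ((f t r p && f t q s) || (f t p r && f t s q))
    ((f t p s && f t q r) || (f t s p && f t r q)).
Definition A5at (E : finType) (f : triple_fun E) (t s p q r : E) :=
  f t s p ==> (f t s q ==> (f t s r ==> (f t p q ==> (f t q r ==> f t p r)))).
Definition D5at (E : finType) (f : triple_fun E) (t s p q r : E) :=
  f t p s ==> (f t q s ==> (f t r s ==> (f t p q ==> (f t q r ==> f t p r)))).
Lemma A5P (E : finType) (f : triple_fun E) (t s p q r : E) :
  A5at f t s p q r <-> (f t s p -> f t s q -> f t s r -> f t p q -> f t q r -> f t p r).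
Proof. rewrite /A5at; split.
- by move=> h h1 h2 h3 h4 h5; move: h; rewrite h1 h2 h3 h4 h5.
- by move=> h; do 5 (apply/implyP => ?); apply: h.
Qed.
Lemma pp0 (T:eqType) (a b c d : T) : perm_eq [:: a;b;c;d] [:: a;b;c;d]. Proof. by apply/permP => P /=; lia. Qed.
Lemma pp1 (T:eqType) (a b c d : T) : perm_eq [:: a;b;c;d] [:: a;b;d;c]. Proof. by apply/permP => P /=; lia. Qed.
Lemma pp2 (T:eqType) (a b c d : T) : perm_eq [:: a;b;c;d] [:: a;c;b;d]. Proof. by apply/permP => P /=; lia. Qed.
Lemma pp3 (T:eqType) (a b c d : T) : perm_eq [:: a;b;c;d] [:: a;c;d;b]. Proof. by apply/permP => P /=; lia. Qed.
Lemma pp4 (T:eqType) (a b c d : T) : perm_eq [:: a;b;c;d] [:: a;d;b;c]. Proof. by apply/permP => P /=; lia. Qed.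
Lemma pp5 (T:eqType) (a b c d : T) : perm_eq [:: a;b;c;d] [:: a;d;c;b]. Proof. by apply/permP => P /=; lia. Qed.
Lemma pp6 (T:eqType) (a b c d : T) : perm_eq [:: a;b;c;d] [:: b;a;c;d]. Proof. by apply/permP => P /=; lia. Qed.
Lemma pp7 (T:eqType) (a b c d : T) : perm_eq [:: a;b;c;d] [:: b;a;d;c]. Proof. by apply/permP => P /=; lia. Qed.
Lemma pp8 (T:eqType) (a b c d : T) : perm_eq [:: a;b;c;d] [:: b;c;a;d]. Proof. by apply/permP => P /=; lia. Qed.
Lemma pp9 (T:eqType) (a b c d : T) : perm_eq [:: a;b;c;d] [:: b;c;d;a]. Proof. by apply/permP => P /=; lia. Qed.
Lemma pp10 (T:eqType) (a b c d : T) : perm_eq [:: a;b;c;d] [:: b;d;a;c]. Proof. by apply/permP => P /=; lia. Qed.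
Lemma pp11 (T:eqType) (a b c d : T) : perm_eq [:: a;b;c;d] [:: b;d;c;a]. Proof. by apply/permP => P /=; lia. Qed.
Lemma pp12 (T:eqType) (a b c d : T) : perm_eq [:: a;b;c;d] [:: c;a;b;d]. Proof. by apply/permP => P /=; lia. Qed.
Lemma pp13 (T:eqType) (a b c d : T) : perm_eq [:: a;b;c;d] [:: c;a;d;b]. Proof. by apply/permP => P /=; lia. Qed.
Lemma pp14 (T:eqType) (a b c d : T) : perm_eq [:: a;b;c;d] [:: c;b;a;d]. Proof. by apply/permP => P /=; lia. Qed.
Lemma pp15 (T:eqType) (a b c d : T) : perm_eq [:: a;b;c;d] [:: c;b;d;a]. Proof. by apply/permP => P /=; lia. Qed.
Lemma pp16 (T:eqType) (a b c d : T) : perm_eq [:: a;b;c;d] [:: c;d;a;b]. Proof. by apply/permP => P /=; lia. Qed.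
Lemma pp17 (T:eqType) (a b c d : T) : perm_eq [:: a;b;c;d] [:: c;d;b;a]. Proof. by apply/permP => P /=; lia. Qed.
Lemma pp18 (T:eqType) (a b c d : T) : perm_eq [:: a;b;c;d] [:: d;a;b;c]. Proof. by apply/permP => P /=; lia. Qed.
Lemma pp19 (T:eqType) (a b c d : T) : perm_eq [:: a;b;c;d] [:: d;a;c;b]. Proof. by apply/permP => P /=; lia. Qed.
Lemma pp20 (T:eqType) (a b c d : T) : perm_eq [:: a;b;c;d] [:: d;b;a;c]. Proof. by apply/permP => P /=; lia. Qed.
Lemma pp21 (T:eqType) (a b c d : T) : perm_eq [:: a;b;c;d] [:: d;b;c;a]. Proof. by apply/permP => P /=; lia. Qed.
Lemma pp22 (T:eqType) (a b c d : T) : perm_eq [:: a;b;c;d] [:: d;c;a;b]. Proof. by apply/permP => P /=; lia. Qed.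
Lemma pp23 (T:eqType) (a b c d : T) : perm_eq [:: a;b;c;d] [:: d;c;b;a]. Proof. by apply/permP => P /=; lia. Qed.
Lemma L1 (E : finType) (f : triple_fun E) : antisymmetry f -> nondegeneracy f ->
  forall t a b c d, distinct5 t a b c d ->
  (forall x1 x2 x3 x4, distinct5 t x1 x2 x3 x4 -> GPat f t x1 x2 x3 x4) -> A5at f t a b c d.
Proof.
move=> AS ND t a b c d D H.
have eqA : forall x y, x != y -> t != x -> t != y -> f t y x = ~~ f t x y.
  move=> x y xy tx ty; have d1 : distinct3 t x y by split.
  move: (AS t x y d1) (ND t x y d1); case: (f t x y); case: (f t y x) => //=; by move/(_ isT).
have /H h0 := perm5 (pp0 a b c d) D.
have /H h1 := perm5 (pp1 a b c d) D.
have /H h2 := perm5 (pp2 a b c d) D.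
have /H h3 := perm5 (pp3 a b c d) D.
have /H h4 := perm5 (pp4 a b c d) D.
have /H h5 := perm5 (pp5 a b c d) D.
have /H h6 := perm5 (pp6 a b c d) D.
have /H h7 := perm5 (pp7 a b c d) D.
have /H h8 := perm5 (pp8 a b c d) D.
have /H h9 := perm5 (pp9 a b c d) D.
have /H h10 := perm5 (pp10 a b c d) D.
have /H h11 := perm5 (pp11 a b c d) D.
have /H h12 := perm5 (pp12 a b c d) D.
have /H h13 := perm5 (pp13 a b c d) D.
have /H h14 := perm5 (pp14 a b c d) D.
have /H h15 := perm5 (pp15 a b c d) D.
have /H h16 := perm5 (pp16 a b c d) D.
have /H h17 := perm5 (pp17 a b c d) D.
have /H h18 := perm5 (pp18 a b c d) D.
have /H h19 := perm5 (pp19 a b c d) D.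
have /H h20 := perm5 (pp20 a b c d) D.
have /H h21 := perm5 (pp21 a b c d) D.
have /H h22 := perm5 (pp22 a b c d) D.
have /H h23 := perm5 (pp23 a b c d) D.
have Da := D; move: Da; rewrite /distinct5 /= !inE !negb_or.
move=> Dx; repeat match goal with Hx : is_true (_ && _) |- _ => case/andP: Hx => ? ? end.
move: h0 h1 h2 h3 h4 h5 h6 h7 h8 h9 h10 h11 h12 h13 h14 h15 h16 h17 h18 h19 h20 h21 h22 h23.
rewrite /GPat /A5at /D5at /has_true_and_false ?(eqA a b) ?(eqA a c) ?(eqA a d) ?(eqA b c) ?(eqA b d) ?(eqA c d) //.
by case: (f t a b); case: (f t a c); case: (f t a d); case: (f t b c); case: (f t b d); case: (f t c d).
Qed.
Lemma qq0 (T:eqType) (t s p q r : T) : perm_eq [:: t;s;p;q;r] [:: p;s;t;r;q]. Proof. by apply/permP => P /=; lia. Qed.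
Lemma qq1 (T:eqType) (t s p q r : T) : perm_eq [:: t;s;p;q;r] [:: r;p;t;q;s]. Proof. by apply/permP => P /=; lia. Qed.
Lemma qq2 (T:eqType) (t s p q r : T) : perm_eq [:: t;s;p;q;r] [:: q;r;t;p;s]. Proof. by apply/permP => P /=; lia. Qed.
Lemma qq3 (T:eqType) (t s p q r : T) : perm_eq [:: t;s;p;q;r] [:: s;t;p;r;q]. Proof. by apply/permP => P /=; lia. Qed.
Lemma qq4 (T:eqType) (t s p q r : T) : perm_eq [:: t;s;p;q;r] [:: r;s;t;q;p]. Proof. by apply/permP => P /=; lia. Qed.
Lemma qq5 (T:eqType) (t s p q r : T) : perm_eq [:: t;s;p;q;r] [:: q;s;t;p;r]. Proof. by apply/permP => P /=; lia. Qed.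
Lemma qq6 (T:eqType) (t s p q r : T) : perm_eq [:: t;s;p;q;r] [:: s;t;p;q;r]. Proof. by apply/permP => P /=; lia. Qed.
Lemma qq7 (T:eqType) (t s p q r : T) : perm_eq [:: t;s;p;q;r] [:: p;q;t;r;s]. Proof. by apply/permP => P /=; lia. Qed.


Lemma Nlem (E : finType) (f : triple_fun E) : cyclic_symmetry f -> antisymmetry f -> nondegeneracy f ->
  forall x y z, distinct3 x y z ->
  [/\ f y z x = f x y z, f z x y = f x y z, f x z y = ~~ f x y z, f z y x = ~~ f x y z & f y x z = ~~ f x y z].
Proof.
move=> C AS ND.
have cyc : forall x y z, distinct3 x y z -> f y z x = f x y z.
  move=> x y z [xy xz yz].
  have d1 : distinct3 x y z by split.
  have d2 : distinct3 y z x by split; rewrite // eq_sym.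
  have d3 : distinct3 z x y by split; rewrite // eq_sym.
  apply/idP/idP => h; [exact: C _ _ _ d3 (C _ _ _ d2 h) | exact: C _ _ _ d1 h].
have an : forall x y z, distinct3 x y z -> f x z y = ~~ f x y z.
  move=> x y z d1.
  move: (AS x y z d1) (ND x y z d1); case: (f x y z); case: (f x z y) => //=; by move/(_ isT).
move=> x y z [xy xz yz].
have d1 : distinct3 x y z by split.
have d2 : distinct3 y z x by split; rewrite // eq_sym.
have d3 : distinct3 z x y by split; rewrite // eq_sym.
split; first exact: cyc.
- by rewrite (cyc _ _ _ d2) (cyc _ _ _ d1).
- exact: an.
- by rewrite (an _ _ _ d3) (cyc _ _ _ d2) (cyc _ _ _ d1).
- by rewrite (an _ _ _ d2) (cyc _ _ _ d1).
Qed.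

Lemma dualL (E : finType) (f : triple_fun E) : cyclic_symmetry f -> antisymmetry f -> nondegeneracy f ->
  transitivity f -> forall t s p q r, distinct5 t s p q r -> D5at f t s p q r.
Proof.
move=> C AS ND X t s p q r D.
have N := Nlem C AS ND.
have h0 : A5at f p s t r q by apply/A5P; apply: X; rewrite /distinct5 -(perm_uniq (qq0 t s p q r)).
have h1 : A5at f r p t q s by apply/A5P; apply: X; rewrite /distinct5 -(perm_uniq (qq1 t s p q r)).
have h2 : A5at f q r t p s by apply/A5P; apply: X; rewrite /distinct5 -(perm_uniq (qq2 t s p q r)).
have h3 : A5at f s t p r q by apply/A5P; apply: X; rewrite /distinct5 -(perm_uniq (qq3 t s p q r)).
have h4 : A5at f r s t q p by apply/A5P; apply: X; rewrite /distinct5 -(perm_uniq (qq4 t s p q r)).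
have h5 : A5at f q s t p r by apply/A5P; apply: X; rewrite /distinct5 -(perm_uniq (qq5 t s p q r)).
have h6 : A5at f s t p q r by apply/A5P; apply: X; rewrite /distinct5 -(perm_uniq (qq6 t s p q r)).
have h7 : A5at f p q t r s by apply/A5P; apply: X; rewrite /distinct5 -(perm_uniq (qq7 t s p q r)).
have Da := D; move: Da; rewrite /distinct5 /= !inE !negb_or.
move=> Dx; repeat match goal with Hx : is_true (_ && _) |- _ => case/andP: Hx => ? ? end.
have [e0_0 e0_1 e0_2 e0_3 e0_4] := N t s p ltac:(by split).
have [e1_0 e1_1 e1_2 e1_3 e1_4] := N t s q ltac:(by split).
have [e2_0 e2_1 e2_2 e2_3 e2_4] := N t s r ltac:(by split).
have [e3_0 e3_1 e3_2 e3_3 e3_4] := N t p q ltac:(by split).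
have [e4_0 e4_1 e4_2 e4_3 e4_4] := N t p r ltac:(by split).
have [e5_0 e5_1 e5_2 e5_3 e5_4] := N t q r ltac:(by split).
have [e6_0 e6_1 e6_2 e6_3 e6_4] := N s p q ltac:(by split).
have [e7_0 e7_1 e7_2 e7_3 e7_4] := N s p r ltac:(by split).
have [e8_0 e8_1 e8_2 e8_3 e8_4] := N s q r ltac:(by split).
have [e9_0 e9_1 e9_2 e9_3 e9_4] := N p q r ltac:(by split).
move: h0 h1 h2 h3 h4 h5 h6 h7.
rewrite /D5at /A5at ?e0_0 ?e0_1 ?e0_2 ?e0_3 ?e0_4 ?e1_0 ?e1_1 ?e1_2 ?e1_3 ?e1_4 ?e2_0 ?e2_1 ?e2_2 ?e2_3 ?e2_4 ?e3_0 ?e3_1 ?e3_2 ?e3_3 ?e3_4 ?e4_0 ?e4_1 ?e4_2 ?e4_3 ?e4_4 ?e5_0 ?e5_1 ?e5_2 ?e5_3 ?e5_4 ?e6_0 ?e6_1 ?e6_2 ?e6_3 ?e6_4 ?e7_0 ?e7_1 ?e7_2 ?e7_3 ?e7_4 ?e8_0 ?e8_1 ?e8_2 ?e8_3 ?e8_4 ?e9_0 ?e9_1 ?e9_2 ?e9_3 ?e9_4.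
by case: (f t s p); case: (f t s q); case: (f t s r); case: (f t p q); case: (f t p r); case: (f t q r); case: (f s p q); case: (f s p r); case: (f s q r); case: (f p q r).
Qed.


Lemma L2 (E : finType) (f : triple_fun E) : antisymmetry f -> nondegeneracy f ->
  forall t a b c d, distinct5 t a b c d ->
  (forall x1 x2 x3 x4, distinct5 t x1 x2 x3 x4 -> A5at f t x1 x2 x3 x4) -> (forall x1 x2 x3 x4, distinct5 t x1 x2 x3 x4 -> D5at f t x1 x2 x3 x4) -> GPat f t a b c d.
Proof.
move=> AS ND t a b c d D H H'.
have eqA : forall x y, x != y -> t != x -> t != y -> f t y x = ~~ f t x y.
  move=> x y xy tx ty; have d1 : distinct3 t x y by split.
  move: (AS t x y d1) (ND t x y d1); case: (f t x y); case: (f t y x) => //=; by move/(_ isT).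
have /H h0 := perm5 (pp0 a b c d) D.
have /H h1 := perm5 (pp1 a b c d) D.
have /H h2 := perm5 (pp2 a b c d) D.
have /H h3 := perm5 (pp3 a b c d) D.
have /H h4 := perm5 (pp4 a b c d) D.
have /H h5 := perm5 (pp5 a b c d) D.
have /H h6 := perm5 (pp6 a b c d) D.
have /H h7 := perm5 (pp7 a b c d) D.
have /H h8 := perm5 (pp8 a b c d) D.
have /H h9 := perm5 (pp9 a b c d) D.
have /H h10 := perm5 (pp10 a b c d) D.
have /H h11 := perm5 (pp11 a b c d) D.
have /H h12 := perm5 (pp12 a b c d) D.
have /H h13 := perm5 (pp13 a b c d) D.
have /H h14 := perm5 (pp14 a b c d) D.
have /H h15 := perm5 (pp15 a b c d) D.
have /H h16 := perm5 (pp16 a b c d) D.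
have /H h17 := perm5 (pp17 a b c d) D.
have /H h18 := perm5 (pp18 a b c d) D.
have /H h19 := perm5 (pp19 a b c d) D.
have /H h20 := perm5 (pp20 a b c d) D.
have /H h21 := perm5 (pp21 a b c d) D.
have /H h22 := perm5 (pp22 a b c d) D.
have /H h23 := perm5 (pp23 a b c d) D.
have /H' k0 := perm5 (pp0 a b c d) D.
have /H' k1 := perm5 (pp1 a b c d) D.
have /H' k2 := perm5 (pp2 a b c d) D.
have /H' k3 := perm5 (pp3 a b c d) D.
have /H' k4 := perm5 (pp4 a b c d) D.
have /H' k5 := perm5 (pp5 a b c d) D.
have /H' k6 := perm5 (pp6 a b c d) D.
have /H' k7 := perm5 (pp7 a b c d) D.
have /H' k8 := perm5 (pp8 a b c d) D.
have /H' k9 := perm5 (pp9 a b c d) D.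
have /H' k10 := perm5 (pp10 a b c d) D.
have /H' k11 := perm5 (pp11 a b c d) D.
have /H' k12 := perm5 (pp12 a b c d) D.
have /H' k13 := perm5 (pp13 a b c d) D.
have /H' k14 := perm5 (pp14 a b c d) D.
have /H' k15 := perm5 (pp15 a b c d) D.
have /H' k16 := perm5 (pp16 a b c d) D.
have /H' k17 := perm5 (pp17 a b c d) D.
have /H' k18 := perm5 (pp18 a b c d) D.
have /H' k19 := perm5 (pp19 a b c d) D.
have /H' k20 := perm5 (pp20 a b c d) D.
have /H' k21 := perm5 (pp21 a b c d) D.
have /H' k22 := perm5 (pp22 a b c d) D.
have /H' k23 := perm5 (pp23 a b c d) D.
have Da := D; move: Da; rewrite /distinct5 /= !inE !negb_or.
move=> Dx; repeat match goal with Hx : is_true (_ && _) |- _ => case/andP: Hx => ? ? end.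
move: k0 k1 k2 k3 k4 k5 k6 k7 k8 k9 k10 k11 k12 k13 k14 k15 k16 k17 k18 k19 k20 k21 k22 k23 h0 h1 h2 h3 h4 h5 h6 h7 h8 h9 h10 h11 h12 h13 h14 h15 h16 h17 h18 h19 h20 h21 h22 h23.
rewrite /A5at /GPat /D5at /has_true_and_false ?(eqA a b) ?(eqA a c) ?(eqA a d) ?(eqA b c) ?(eqA b d) ?(eqA c d) //.
by case: (f t a b); case: (f t a c); case: (f t a d); case: (f t b c); case: (f t b d); case: (f t c d).
Qed.

Theorem lemma2 (E : finType) (f : triple_fun E) :
  uniform_chirotope f <-> pre_CC_system f.
Proof.
split=> -[C AS ND X]; split=> //.
- move=> t s p q r D; apply/A5P; exact: (L1 AS ND D (fun x1 x2 x3 x4 D' => X t x1 x2 x3 x4 D')).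
- move=> t p q r s D; apply: (L2 AS ND D).
  + move=> x1 x2 x3 x4 D'; apply/A5P; exact: X.
  + move=> x1 x2 x3 x4 D'; exact: dualL.
Qed.
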